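(* Let $\mathsf V=(\mathsf V,\otimes,k)$ be a quantale whose underlying lattice is a Heyting algebra. The following are equivalent: (i) for all $u,v,w\in\mathsf V$, $w\wedge(u\otimes v)=\bigvee\{u'\otimes v'\mid u'\le u,\ v'\le v,\ u'\otimes v'\le w\}$; (ii) every injective $\mathsf V$-category is exponentiable in $\mathsf{Cat}(\mathsf V)$; (iii) the $\mathsf V$-category $(\mathsf V,\hom)$ is exponentiable in $\mathsf{Cat}(\mathsf V)$.
   Context: A quantale $\mathsf V=(\mathsf V,\otimes,k)$ is a complete anti-symmetric lattice with an associative, commutative binary operation $\otimes$ with neutral element $k$ distributing over arbitrary suprema; $\hom(u,-)$ is the right adjoint of $u\otimes-$. A $\mathsf V$-category $(X,a)$ is a set with $a:X\times X\to\mathsf V$ such that $k\le a(x,x)$ and $a(x,y)\otimes a(y,z)\le a(x,z)$; a $\mathsf V$-functor $f:(X,a)\to(Y,b)$ is a map with $a(x,y)\le b(f(x),f(y))$; these form the category $\mathsf{Cat}(\mathsf V)$. $f$ is fully faithful if $a(x,y)=b(f(x),f(y))$. The binary product of $(X,a)$ and $(Y,b)$ in $\mathsf{Cat}(\mathsf V)$ is $X\times Y$ with structure $a(x,x')\wedge b(y,y')$. For $\mathsf V$-functors $f,g:X\to Y$, $f\le g$ means $k\le b(f(x),g(x))$ for all $x$, and $f\simeq g$ means $f\le g$ and $g\le f$. A $\mathsf V$-category $X$ is injective if for every fully faithful $\mathsf V$-functor $i:A\to B$ and every $\mathsf V$-functor $f:A\to X$ there is a $\mathsf V$-functor $g:B\to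 X$ with $g\cdot i\simeq f$. $X$ is exponentiable if the functor $X\times-:\mathsf{Cat}(\mathsf V)\to\mathsf{Cat}(\mathsf V)$ has a right adjoint. *)

(* Defs.v *)
Record Quantale := {
  qcar :> Type;
  qle : qcar -> qcar -> Prop;
  qsup : (qcar -> Prop) -> qcar;
  qtensor : qcar -> qcar -> qcar;
  qk : qcar;
  qle_refl : forall u, qle u u;
  qle_trans : forall u v w, qle u v -> qle v w -> qle u w;
  qle_antisym : forall u v, qle u v -> qle v u -> u = v;
  qsup_ub : forall (S : qcar -> Prop) u, S u -> qle u (qsup S);
  qsup_least : forall (S : qcar -> Prop) v, (forall u, S u -> qle u v) -> qle (qsup S) v;
  qtensor_assoc : forall u v w, qtensor u (qtensor v w) = qtensor (qtensor u v) w;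
  qtensor_comm : forall u v, qtensor u v = qtensor v u;
  qtensor_unit : forall u, qtensor qk u = u;
  qtensor_sup : forall u (S : qcar -> Prop),
      qtensor u (qsup S) = qsup (fun z => exists s, S s /\ z = qtensor u s)
}.

Section QDefs.
Variable V : Quantale.

Definition qmeet (u v : V) : V := @qsup V (fun w => @qle V w u /\ @qle V w v).

Definition qhom (u v : V) : V := @qsup V (fun w => @qle V (@qtensor V u w) v).

Definition heyting : Prop :=
  forall u v : V, exists h : V, forall w : V, @qle V (qmeet w u) v <-> @qle V w h.

(* raw V-valued structures; V-categories are those satisfying is_vcat *)
Record VStruct := { vcar :> Type; vhom : vcar -> vcar -> V }.

Definition is_vcat (X : VStruct) : Prop :=
  (forall x : X, @qle V (@qk V) (@vhom X x x)) /\
  (forall x y z : X, @qle V (@qtensor V (@vhom X x y) (@vhom X y z)) (@vhom X x z)).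

Definition is_vfunctor (X Y : VStruct) (f : X -> Y) : Prop :=
  forall x x' : X, @qle V (@vhom X x x') (@vhom Y (f x) (f x')).

Definition fully_faithful (X Y : VStruct) (f : X -> Y) : Prop :=
  forall x x' : X, @vhom X x x' = @vhom Y (f x) (f x').

Definition vfun_le (X Y : VStruct) (f g : X -> Y) : Prop :=
  forall x : X, @qle V (@qk V) (@vhom Y (f x) (g x)).

Definition vfun_iso (X Y : VStruct) (f g : X -> Y) : Prop :=
  vfun_le X Y f g /\ vfun_le X Y g f.

Definition vprod (X Y : VStruct) : VStruct :=
  {| vcar := (vcar X * vcar Y)%type;
     vhom := fun p q => qmeet (@vhom X (fst p) (fst q)) (@vhom Y (snd p) (snd q)) |}.

Definition VasCat : VStruct := {| vcar := qcar V; vhom := qhom |}.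

Definition injective (X : VStruct) : Prop :=
  forall (A B : VStruct), is_vcat A -> is_vcat B ->
  forall i : A -> B, is_vfunctor A B i -> fully_faithful A B i ->
  forall f : A -> X, is_vfunctor A X f ->
  exists g : B -> X, is_vfunctor B X g /\ vfun_iso A X (fun a => g (i a)) f.

(* X x - : Cat(V) -> Cat(V) has a right adjoint, expressed through its
   universal arrows (couniversal counits): for every V-category Z there is a
   V-category Z^X and a V-functor ev : X x Z^X -> Z such that every V-functor
   f : X x Y -> Z factors as ev . (1_X x g) for a unique V-functor g : Y -> Z^X. *)
Definition exponentiable (X : VStruct) : Prop :=
  forall Z : VStruct, is_vcat Z ->
  exists (E : VStruct) (ev : vprod X E -> Z),
    is_vcat E /\ is_vfunctor (vprod X E) Z ev /\
    forall Y : VStruct, is_vcat Y ->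
    forall f : vprod X Y -> Z, is_vfunctor (vprod X Y) Z f ->
      (exists g : Y -> E, is_vfunctor Y E g /\
         forall (x : X) (y : Y), ev (x, g y) = f (x, y)) /\
      (forall g1 g2 : Y -> E, is_vfunctor Y E g1 -> is_vfunctor Y E g2 ->
         (forall (x : X) (y : Y), ev (x, g1 y) = f (x, y)) ->
         (forall (x : X) (y : Y), ev (x, g2 y) = f (x, y)) ->
         forall y : Y, g1 y = g2 y).

End QDefs.

(* Main.v *)
Require Import Defs.
From Stdlib Require Import FunctionalExtensionality ProofIrrelevance.

Section Basics.
Variable V : Quantale.
Local Notation "a <== b" := (qle V a b) (at level 70).
Local Notation "a ** b" := (qtensor V a b) (at level 40, left associativity).
Local Notation "a //\ b" := (qmeet V a b) (at level 45).
Local Notation k := (qk V).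
Local Notation hom := (vhom V).

Lemma le_refl (a : V) : a <== a. Proof. apply qle_refl. Qed.
Lemma le_trans (a b c : V) : a <== b -> b <== c -> a <== c.
Proof. apply qle_trans. Qed.

Definition bot : V := qsup V (fun _ => False).
Lemma bot_le (a : V) : bot <== a.
Proof. apply qsup_least. intros _ []. Qed.

Lemma sup_le (S : V -> Prop) c : (forall s, S s -> s <== c) -> qsup V S <== c.
Proof. apply qsup_least. Qed.
Lemma le_sup (S : V -> Prop) a s : S s -> a <== s -> a <== qsup V S.
Proof. intros H1 H2. eapply le_trans; [exact H2|]. now apply qsup_ub. Qed.

Lemma tensor_sup_le a (S : V -> Prop) c :
  (forall s, S s -> a ** s <== c) -> a ** qsup V S <== c.
Proof.
  intros H. rewrite qtensor_sup. apply sup_le. intros z [s [Hs ->]]. auto.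
Qed.

Lemma tensor_monor a b b' : b <== b' -> a ** b <== a ** b'.
Proof.
  intros H.
  assert (E : qsup V (fun z => z = b \/ z = b') = b').
  { apply qle_antisym. apply sup_le. intros s [->| ->]; auto using le_refl.
    apply qsup_ub. now right. }
  rewrite <- E, qtensor_sup. apply qsup_ub. exists b. split; auto.
Qed.
Lemma tensor_monol a a' b : a <== a' -> a ** b <== a' ** b.
Proof. intros H. rewrite (qtensor_comm V a), (qtensor_comm V a'). now apply tensor_monor. Qed.
Lemma tensor_mono a a' b b' : a <== a' -> b <== b' -> a ** b <== a' ** b'.
Proof. intros. eapply le_trans. apply tensor_monol; eauto. now apply tensor_monor. Qed.

Lemma unit_r a : a ** k = a.
Proof. rewrite qtensor_comm. apply qtensor_unit. Qed.

Lemma tensor_botr a b c : b <== bot -> a ** b <== c.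
Proof. intros H. eapply le_trans. apply tensor_monor; exact H.
  apply tensor_sup_le. intros _ []. Qed.
Lemma tensor_botl a b c : a <== bot -> a ** b <== c.
Proof. intros H. rewrite qtensor_comm. now apply tensor_botr. Qed.

Lemma meet_lb1 a b : a //\ b <== a.
Proof. apply sup_le. intros s [H _]; auto. Qed.
Lemma meet_lb2 a b : a //\ b <== b.
Proof. apply sup_le. intros s [_ H]; auto. Qed.
Lemma meet_glb a b w : w <== a -> w <== b -> w <== a //\ b.
Proof. intros. apply qsup_ub. auto. Qed.
Lemma meet_mono a a' b b' : a <== a' -> b <== b' -> a //\ b <== a' //\ b'.
Proof. intros. apply meet_glb; eapply le_trans; [apply meet_lb1|auto|apply meet_lb2|auto]. Qed.
Lemma meet_comm a b : a //\ b = b //\ a.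
Proof. apply qle_antisym; apply meet_glb; auto using meet_lb1, meet_lb2. Qed.

Lemma hom_adj1 a b u : u <== qhom V a b -> a ** u <== b.
Proof. intros H. eapply le_trans. apply tensor_monor; exact H.
  apply tensor_sup_le. auto. Qed.
Lemma hom_adj2 a b u : a ** u <== b -> u <== qhom V a b.
Proof. intros. now apply qsup_ub. Qed.
Lemma hom_k w : qhom V k w = w.
Proof. apply qle_antisym.
  - rewrite <- (qtensor_unit V (qhom V k w)). apply hom_adj1, le_refl.
  - apply hom_adj2. rewrite qtensor_unit. apply le_refl. Qed.

Lemma meet_sup_le (HV : heyting V) a (S : V -> Prop) c :
  (forall e, S e -> a //\ e <== c) -> a //\ qsup V S <== c.
Proof.
  intros H. destruct (HV a c) as [h Hh]. rewrite meet_comm. apply Hh.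
  apply sup_le. intros e He. apply Hh. rewrite meet_comm. auto.
Qed.

Lemma VasCat_vcat : is_vcat V (VasCat V).
Proof.
  split; simpl.
  - intros x. apply hom_adj2. rewrite unit_r. apply le_refl.
  - intros x y z. apply hom_adj2. rewrite qtensor_assoc.
    eapply le_trans. apply tensor_monol. apply hom_adj1, le_refl.
    apply hom_adj1, le_refl.
Qed.

Lemma VasCat_inj : injective V (VasCat V).
Proof.
  intros A B HA HB i Hi Hff f Hf.
  set (g := fun b : B => qsup V (fun z => exists a, z = f a ** hom B (i a) b)).
  exists g. split.
  - intros b b'. simpl. apply hom_adj2. unfold g.
    rewrite qtensor_comm. apply tensor_sup_le. intros s [a ->].
    apply le_sup with (f a ** hom B (i a) b'). eauto.
    rewrite qtensor_comm, <- qtensor_assoc. apply tensor_monor.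
    destruct HB as [_ HB]. apply HB.
  - split; intros a; simpl; apply hom_adj2; rewrite qtensor_comm, qtensor_unit; unfold g.
    + apply sup_le. intros s [a' ->]. rewrite <- Hff.
      apply hom_adj1. apply Hf.
    + apply le_sup with (f a ** hom B (i a) (i a)). eauto.
      rewrite <- Hff. apply le_trans with (f a ** k). rewrite unit_r; apply le_refl. apply tensor_monor. apply HA.
Qed.
End Basics.

Section Exp.
Variable V : Quantale.
Variable HV : heyting V.
Local Notation "a <== b" := (qle V a b) (at level 70).
Local Notation "a ** b" := (qtensor V a b) (at level 40, left associativity).
Local Notation "a //\ b" := (qmeet V a b) (at level 45).
Local Notation k := (qk V).
Local Notation hom := (vhom V).

Definition condC (X : VStruct V) := forall (x0 x2 : X) (u v : V),
  hom X x0 x2 //\ (u ** v) <==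
  qsup V (fun z => exists x1, z = (hom X x0 x1 //\ u) ** (hom X x1 x2 //\ v)).

Section E.
Variables (X Z : VStruct V) (HC : condC X) (HZ : is_vcat V Z).

Definition ehom (h h' : X -> Z) : V := qsup V (fun e => forall x x',
   hom X x x' //\ e <== hom Z (h x) (h' x')).
Lemma ehom_spec h h' x x' : hom X x x' //\ ehom h h' <== hom Z (h x) (h' x').
Proof. apply meet_sup_le; auto. Qed.
Lemma ehom_in h h' e : (forall x x', hom X x x' //\ e <== hom Z (h x) (h' x')) -> e <== ehom h h'.
Proof. intros; apply qsup_ub; auto. Qed.

Definition ecar := { h : X -> Z | k <== ehom h h }.
Definition EStr : VStruct V := {| vcar := ecar; vhom := fun h h' => ehom (proj1_sig h) (proj1_sig h') |}.
Definition evm (p : vprod V X EStr) : Z := proj1_sig (snd p) (fst p).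

Lemma EStr_vcat : is_vcat V EStr.
Proof.
  split.
  - intros [h p]; exact p.
  - intros [h p] [h' p'] [h'' p'']; simpl.
    apply ehom_in. intros x x''. eapply le_trans. apply HC.
    apply sup_le. intros s [x1 ->]. eapply le_trans; [|apply (proj2 HZ) with (y := h' x1)].
    apply tensor_mono; apply ehom_spec.
Qed.

Lemma evm_fun : is_vfunctor V (vprod V X EStr) Z evm.
Proof. intros [x h] [x' h']. simpl. apply ehom_spec. Qed.

Lemma sig_ext (a b : ecar) : proj1_sig a = proj1_sig b -> a = b.
Proof. destruct a, b; simpl; intros ->. f_equal. apply proof_irrelevance. Qed.

Lemma condC_exp_Z : exists (E : VStruct V) (ev : vprod V X E -> Z),
    is_vcat V E /\ is_vfunctor V (vprod V X E) Z ev /\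
    forall Y : VStruct V, is_vcat V Y ->
    forall f : vprod V X Y -> Z, is_vfunctor V (vprod V X Y) Z f ->
      (exists g : Y -> E, is_vfunctor V Y E g /\
         forall (x : X) (y : Y), ev (x, g y) = f (x, y)) /\
      (forall g1 g2 : Y -> E, is_vfunctor V Y E g1 -> is_vfunctor V Y E g2 ->
         (forall (x : X) (y : Y), ev (x, g1 y) = f (x, y)) ->
         (forall (x : X) (y : Y), ev (x, g2 y) = f (x, y)) ->
         forall y : Y, g1 y = g2 y).
Proof.
  exists EStr, evm. split; [apply EStr_vcat|]. split; [apply evm_fun|].
  intros Y HY f Hf. split.
  - assert (Hin : forall y y', hom Y y y' <== ehom (fun x => f (x, y)) (fun x => f (x, y'))).
    { intros y y'. apply ehom_in. intros x x'. apply (Hf (x, y) (x', y')). }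
    exists (fun y => exist _ (fun x => f (x, y)) (le_trans _ _ _ _ (proj1 HY y) (Hin y y))).
    split; [intros y y'; apply Hin|]. reflexivity.
  - intros g1 g2 _ _ H1 H2 y. apply sig_ext. apply functional_extensionality.
    intros x. specialize (H1 x y). specialize (H2 x y). unfold evm in *; simpl in *. congruence.
Qed.
End E.

Lemma condC_exp (X : VStruct V) : condC X -> exponentiable V X.
Proof. intros HC Z HZ. now apply condC_exp_Z. Qed.

Definition condI := forall u v w : V,
      qmeet V w (qtensor V u v) =
      qsup V (fun z => exists u' v' : V,
                qle V u' u /\ qle V v' v /\ qle V (qtensor V u' v') w /\
                z = qtensor V u' v').

Section Inj.
Variables (X : VStruct V) (HX : is_vcat V X).
Definition phom (p q : X -> V) : V := qsup V (fun w => forall z, w <== qhom V (p z) (q z)).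
Lemma phom_spec p q z : phom p q <== qhom V (p z) (q z).
Proof. apply sup_le. auto. Qed.
Lemma phom_in p q w : (forall z, w <== qhom V (p z) (q z)) -> w <== phom p q.
Proof. intros; apply qsup_ub; auto. Qed.
Definition PStr : VStruct V := {| vcar := X -> V; vhom := phom |}.
Lemma PStr_vcat : is_vcat V PStr.
Proof.
  split; simpl.
  - intros p. apply phom_in. intros z. apply (proj1 (VasCat_vcat V)).
  - intros p q r. apply phom_in. intros z. eapply le_trans; [|apply (proj2 (VasCat_vcat V)) with (y := q z)].
    simpl. apply tensor_mono; apply phom_spec.
Qed.
Definition yon (x : X) : PStr := fun z => hom X z x.
Lemma yon_fun : is_vfunctor V X PStr yon.
Proof. intros x x'. simpl. apply phom_in. intros z. apply hom_adj2. apply (proj2 HX). Qed.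
Lemma yon_ff : fully_faithful V X PStr yon.
Proof.
  intros x x'. apply qle_antisym. apply yon_fun.
  simpl. eapply le_trans. apply phom_spec with (z := x). unfold yon.
  eapply le_trans; [|apply hom_adj1 with (u := qhom V (hom X x x) (hom X x x')); apply le_refl].
  apply le_trans with (k ** qhom V (hom X x x) (hom X x x')).
  rewrite qtensor_unit; apply le_refl. apply tensor_monol. apply HX.
Qed.

Lemma inj_condC (HI : condI) (Hinj : injective V X) : condC X.
Proof.
  destruct (Hinj X PStr HX PStr_vcat yon yon_fun yon_ff (fun x => x) (fun x y => le_refl V _))
    as [r [Hr [Hr1 Hr2]]].
  intros x0 x2 u v. rewrite HI. apply sup_le.
  intros s [u' [v' [Hu [Hv [Hw ->]]]]].
  set (p1 := fun z => hom X z x0 ** u').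
  apply le_sup with ((hom X x0 (r p1) //\ u) ** (hom X (r p1) x2 //\ v)). eauto.
  apply tensor_mono; apply meet_glb; auto.
  - assert (H1 : u' <== phom (yon x0) p1).
    { apply phom_in. intros z. apply hom_adj2. unfold p1, yon. apply le_refl. }
    apply le_trans with (k ** u'). rewrite qtensor_unit; apply le_refl.
    eapply le_trans; [|apply (proj2 HX) with (y := r (yon x0))].
    apply tensor_mono. apply Hr2. eapply le_trans. exact H1. apply (Hr (yon x0) p1).
  - assert (H1 : v' <== phom p1 (yon x2)).
    { apply phom_in. intros z. apply hom_adj2. unfold p1, yon. rewrite <- qtensor_assoc.
      eapply le_trans; [|apply (proj2 HX) with (y := x0)]. apply tensor_monor. exact Hw. }
    apply le_trans with (v' ** k). rewrite unit_r; apply le_refl.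
    eapply le_trans; [|apply (proj2 HX) with (y := r (yon x2))].
    apply tensor_mono. eapply le_trans. exact H1. apply (Hr p1 (yon x2)). apply Hr1.
Qed.
End Inj.
End Exp.

Section Nec.
Variable V : Quantale.
Local Notation "a <== b" := (qle V a b) (at level 70).
Local Notation "a ** b" := (qtensor V a b) (at level 40, left associativity).
Local Notation "a //\ b" := (qmeet V a b) (at level 45).
Local Notation k := (qk V).
Local Notation hom := (vhom V).

Inductive three := T0 | T1 | T2.

Section N.
Variables (X : VStruct V) (HX : is_vcat V X) (u v : V).

Definition yv (i j : three) : V :=
  match i, j with
  | T0, T0 | T1, T1 | T2, T2 => k
  | T0, T1 => u | T1, T2 => v | T0, T2 => u ** v
  | _, _ => bot V end.

Definition sv (x x' : X) : V :=
  qsup V (fun z => exists x1, z = (hom X x x1 //\ u) ** (hom X x1 x' //\ v)).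

Definition zh (p q : X * three) : V :=
  match snd p, snd q with
  | T0, T2 => sv (fst p) (fst q)
  | i, j => hom X (fst p) (fst q) //\ yv i j end.

Definition ZStr : VStruct V := {| vcar := (vcar V X * three)%type; vhom := zh |}.

Lemma mk_l a b c t : (hom X a b //\ k) ** (hom X b c //\ t) <== hom X a c //\ t.
Proof. apply meet_glb.
  - eapply le_trans; [|apply (proj2 HX)]. apply tensor_mono; apply meet_lb1.
  - apply le_trans with (k ** t). apply tensor_mono; apply meet_lb2. rewrite qtensor_unit; apply le_refl.
Qed.
Lemma mk_r a b c t : (hom X a b //\ t) ** (hom X b c //\ k) <== hom X a c //\ t.
Proof. apply meet_glb.
  - eapply le_trans; [|apply (proj2 HX)]. apply tensor_mono; apply meet_lb1.
  - apply le_trans with (t ** k). apply tensor_mono; apply meet_lb2. rewrite unit_r; apply le_refl.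
Qed.
Lemma mk_sl a b c : (hom X a b //\ k) ** sv b c <== sv a c.
Proof. apply tensor_sup_le. intros s [x1 ->]. rewrite qtensor_assoc.
  apply le_sup with ((hom X a x1 //\ u) ** (hom X x1 c //\ v)). eauto.
  apply tensor_monol. apply mk_l. Qed.
Lemma mk_sr a b c : sv a b ** (hom X b c //\ k) <== sv a c.
Proof. rewrite qtensor_comm. apply tensor_sup_le. intros s [x1 ->].
  rewrite qtensor_comm, <- qtensor_assoc.
  apply le_sup with ((hom X a x1 //\ u) ** (hom X x1 c //\ v)). eauto.
  apply tensor_monor. apply mk_r. Qed.
Lemma mk_m a b c : (hom X a b //\ u) ** (hom X b c //\ v) <== sv a c.
Proof. apply le_sup with ((hom X a b //\ u) ** (hom X b c //\ v)). eauto. apply le_refl. Qed.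

Lemma ZStr_vcat : is_vcat V ZStr.
Proof.
  split.
  - intros [x i]; destruct i; simpl; apply meet_glb; try apply le_refl; apply HX.
  - intros [a i] [b j] [c l]; destruct i, j, l; simpl;
      first [ apply mk_l | apply mk_r | apply mk_sl | apply mk_sr | apply mk_m
            | apply tensor_botl; apply meet_lb2 | apply tensor_botr; apply meet_lb2 ].
Qed.

Definition bh (t : V) (b b' : bool) : V :=
  match b, b' with false, true => t | true, false => bot V | _, _ => k end.
Definition BStr (t : V) : VStruct V := {| vcar := bool; vhom := bh t |}.
Lemma BStr_vcat t : is_vcat V (BStr t).
Proof.
  split.
  - intros []; apply le_refl.
  - intros [] [] []; simpl; first [rewrite qtensor_unit; apply le_refl | rewrite unit_r; apply le_refl
      | apply tensor_botl; apply le_refl | apply tensor_botr; apply le_refl].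
Qed.
Definition UStr : VStruct V := {| vcar := unit; vhom := fun _ _ => k |}.
Lemma UStr_vcat : is_vcat V UStr.
Proof. split. intros; apply le_refl. intros; simpl; rewrite qtensor_unit; apply le_refl. Qed.

Definition f01 (p : vprod V X (BStr u)) : ZStr := (fst p, if snd p then T1 else T0).
Definition f12 (p : vprod V X (BStr v)) : ZStr := (fst p, if snd p then T2 else T1).
Definition f1 (p : vprod V X UStr) : ZStr := (fst p, T1).

Lemma f01_fun : is_vfunctor V _ _ f01.
Proof. intros [x []] [x' []]; simpl; apply le_refl. Qed.
Lemma f12_fun : is_vfunctor V _ _ f12.
Proof. intros [x []] [x' []]; simpl; apply le_refl. Qed.
Lemma f1_fun : is_vfunctor V _ _ f1.
Proof. intros [x []] [x' []]; simpl; apply le_refl. Qed.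

Definition YStr : VStruct V := {| vcar := three; vhom := yv |}.

Lemma exp_condC0 : exponentiable V X -> forall x0 x2, hom X x0 x2 //\ (u ** v) <== sv x0 x2.
Proof.
  intros Hexp x0 x2.
  destruct (Hexp ZStr ZStr_vcat) as [E [ev [HE [Hev Hu]]]].
  destruct (proj1 (Hu _ (BStr_vcat u) f01 f01_fun)) as [g01 [Hg01 Hg01e]].
  destruct (proj1 (Hu _ (BStr_vcat v) f12 f12_fun)) as [g12 [Hg12 Hg12e]].
  assert (Heq : g01 true = g12 false).
  { refine (proj2 (Hu _ UStr_vcat f1 f1_fun) (fun _ => g01 true) (fun _ => g12 false) _ _ _ _ tt).
    - intros a b; apply HE.
    - intros a b; apply HE.
    - intros x w. rewrite Hg01e. reflexivity.
    - intros x w. rewrite Hg12e. reflexivity. }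
  set (g := fun i => match i with T0 => g01 false | T1 => g01 true | T2 => g12 true end).
  assert (Hg : is_vfunctor V YStr E g).
  { intros [] []; simpl; try apply HE; try apply bot_le.
    - apply (Hg01 false true).
    - eapply le_trans; [|apply (proj2 HE) with (y := g01 true)].
      apply tensor_mono. apply (Hg01 false true). rewrite Heq. apply (Hg12 false true).
    - rewrite Heq. apply (Hg12 false true). }
  pose proof (Hev (x0, g T0) (x2, g T2)) as H. simpl in H.
  replace (ev (x0, g01 false)) with (x0, T0) in H by (rewrite Hg01e; reflexivity).
  replace (ev (x2, g12 true)) with (x2, T2) in H by (rewrite Hg12e; reflexivity).
  simpl in H. eapply le_trans; [|exact H]. apply meet_mono. apply le_refl.
  apply (Hg T0 T2).
Qed.
End N.

Lemma exp_condC (X : VStruct V) : is_vcat V X -> exponentiable V X -> condC V X.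
Proof. intros HX He x0 x2 u v. now apply exp_condC0. Qed.
End Nec.

Lemma iii_i (V : Quantale) : exponentiable V (VasCat V) -> condI V.
Proof.
  intros He. pose proof (exp_condC V (VasCat V) (VasCat_vcat V) He) as HC.
  intros u v w. apply qle_antisym.
  - specialize (HC (qk V) w u v). simpl in HC. rewrite hom_k in HC.
    eapply le_trans. exact HC. apply sup_le. intros s [x1 ->].
    eapply le_sup. do 2 eexists. split; [|split; [|split; [|reflexivity]]].
    apply meet_lb2. apply meet_lb2.
    apply le_trans with (qtensor V (qhom V (qk V) x1) (qhom V x1 w)).
    apply tensor_mono; apply meet_lb1.
    apply le_trans with (qhom V (qk V) w).
    exact (proj2 (VasCat_vcat V) (qk V) x1 w). rewrite hom_k. apply le_refl.
    apply le_refl.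
  - apply sup_le. intros s [u' [v' [Hu [Hv [Hw ->]]]]]. apply meet_glb. exact Hw.
    now apply tensor_mono.
Qed.

Theorem theorem4p3 (V : Quantale) (HV : heyting V) :
  ((forall u v w : V,
      qmeet V w (qtensor V u v) =
      qsup V (fun z => exists u' v' : V,
                qle V u' u /\ qle V v' v /\ qle V (qtensor V u' v') w /\
                z = qtensor V u' v'))
   <-> (forall X : VStruct V, is_vcat V X -> injective V X -> exponentiable V X))
  /\
  ((forall X : VStruct V, is_vcat V X -> injective V X -> exponentiable V X)
   <-> exponentiable V (VasCat V)).
Proof.
  assert (A : condI V -> forall X : VStruct V, is_vcat V X -> injective V X -> exponentiable V X).
  { intros HI X HX Hinj. apply (condC_exp V HV). now apply inj_condC. }
  assert (B : (forall X : VStruct V, is_vcat V X -> injective V X -> exponentiable V X) ->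
              exponentiable V (VasCat V)).
  { intros H. apply H. apply VasCat_vcat. apply VasCat_inj. }
  split; split.
  - exact A.
  - intros H. apply iii_i. now apply B.
  - exact B.
  - intros H. apply A. now apply iii_i.
Qed.
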